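(* Let $p$ be an odd prime, let $d>1$ be an integer, and let $q$ be an even power of $p$ with $q \equiv 1 \pmod{2d}$. Let $\chi$ be a multiplicative character of $\mathbb{F}_q$ of order $d$. Let $A \subseteq \mathbb{F}_q$ with $|A|=\sqrt{q}$, and for $c \in \mathbb{F}_q^*$ let $S(c)=\sum_{a \in A} e_p\big(\operatorname{Tr}(ac)\big)$. Then $A$ is a maximum clique in $GP(q,d)$ if and only if for every $c \in \mathbb{F}_q^*$ the complex numbers $\chi(c)|S(c)|^2$ and $G(\chi)$ share the same argument. In particular, if $\omega\big(GP(q,d)\big)=\sqrt{q}$, then $\epsilon(\chi)$ is a $d$-th root of unity, the Gauss sum $G(\chi)=\epsilon(\chi)\sqrt{q}$ is pure, and $S(c)=0$ for every $c \in \mathbb{F}_q^*$ with $\chi(c) \neq \epsilon(\chi)$.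
   Context: $GP(q,d)$ is the graph on $\mathbb{F}_q$ in which distinct $x,y$ are adjacent iff $x-y$ is a $d$-th power in $\mathbb{F}_q^*$; $\omega$ denotes clique number. $\operatorname{Tr}$ is the absolute trace $\mathbb{F}_q \to \mathbb{F}_p$, $\operatorname{Tr}(\alpha)=\alpha+\alpha^p+\dots+\alpha^{q/p}$, and $e_p(x)=e^{2\pi i x/p}$ for $x\in\mathbb{F}_p$ (identified with $\{0,\dots,p-1\}$). Multiplicative characters are extended by $\chi(0)=0$. The Gauss sum is $G(\chi)=\sum_{c \in \mathbb{F}_q}\chi(c)e_p(\operatorname{Tr}(c))$, and for nontrivial $\chi$ the normalized Gauss sum is $\epsilon(\chi)=q^{-1/2}G(\chi)$. A Gauss sum is pure if some nonzero integral power of it is a real number. The number $0$ is regarded as sharing the argument of any complex number. *)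

(* Defs.v *)
From HB Require Import structures.
From mathcomp Require Import all_boot all_order all_algebra all_field.
From mathcomp Require Import reals trigo complex.
Set Implicit Arguments. Unset Strict Implicit. Unset Printing Implicit Defensive.
Import Order.TTheory GRing.Theory Num.Theory.
Local Open Scope ring_scope.
Local Open Scope complex_scope.

Section GaussDefs.
Variables (R : realType) (F : finFieldType) (p m : nat).
(* #|F| = q = p ^ (2 m) ; the absolute trace has 2m terms *)

Definition absTr (a : F) : F := \sum_(i < 2 * m) a ^+ (p ^ i).

Definition primefield_nat (x : F) : nat :=
  odflt 0%N (omap (@nat_of_ord p) [pick n : 'I_p | (n%:R : F) == x]).

Definition e_p (n : nat) : R[i] :=
  (cos (2 * pi * n%:R / p%:R)) +i* (sin (2 * pi * n%:R / p%:R)).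

Definition psi (x : F) : R[i] := e_p (primefield_nat (absTr x)).

Definition mult_char (chi : F -> R[i]) : Prop :=
  chi 0 = 0 /\ chi 1 = 1 /\ forall x y, chi (x * y) = chi x * chi y.

Definition char_order (chi : F -> R[i]) (d : nat) : Prop :=
  (0 < d)%N /\ (forall x : F, x != 0 -> chi x ^+ d = 1) /\
  (forall k : nat, (0 < k < d)%N -> exists x : F, x != 0 /\ chi x ^+ k != 1).

Definition gauss_sum (chi : F -> R[i]) : R[i] := \sum_(c : F) chi c * psi c.

Definition sqrtq : R[i] := (Num.sqrt (#|F|%:R : R))%:C.

Definition eps_gauss (chi : F -> R[i]) : R[i] := gauss_sum chi / sqrtq.

Definition S_sum (A : {set F}) (c : F) : R[i] := \sum_(a in A) psi (a * c).

End GaussDefs.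

Definition gp_adj (F : finFieldType) (d : nat) (x y : F) : Prop :=
  x != y /\ exists z : F, z != 0 /\ x - y = z ^+ d.

Definition gp_clique (F : finFieldType) (d : nat) (A : {set F}) : Prop :=
  forall x y, x \in A -> y \in A -> x != y -> gp_adj d x y.

Definition gp_max_clique (F : finFieldType) (d : nat) (A : {set F}) : Prop :=
  gp_clique d A /\ forall B : {set F}, gp_clique d B -> (#|B| <= #|A|)%N.

Definition gp_clique_number (F : finFieldType) (d : nat) (w : nat) : Prop :=
  (exists A : {set F}, gp_clique d A /\ #|A| = w) /\
  forall B : {set F}, gp_clique d B -> (#|B| <= w)%N.

Definition same_arg (R : realType) (u v : R[i]) : Prop :=
  u = 0 \/ v = 0 \/ exists r : R, 0 < r /\ u = r%:C * v.

Definition pure_num (R : realType) (z : R[i]) : Prop :=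
  exists n : int, n != 0 /\ (z ^ n) \is Num.real.

(* Main.v *)
Require Import Defs.
From HB Require Import structures.
From mathcomp Require Import all_boot all_order all_algebra all_field.
From mathcomp Require Import reals trigo complex.
From mathcomp Require Import cyclic ring.
Import Order.TTheory GRing.Theory Num.Theory.
Local Open Scope ring_scope.
Local Open Scope complex_scope.

Section Main.
Variables (R : realType) (F : finFieldType) (p m : nat).
Hypotheses (pp : prime p) (p2 : (2 < p)%N) (hm : (0 < m)%N) (hq : #|F| = (p ^ (2 * m))%N).

Lemma pcharF : p \in [pchar F].
Proof. exact: card_finPcharP hq pp. Qed.

Lemma frobD (x y : F) : (x + y) ^+ p = x ^+ p + y ^+ p.
Proof.
have := pFrobenius_autD_comm pcharF (mulrC x y).
by rewrite !pFrobenius_autE.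
Qed.

Lemma frobM (x y : F) : (x * y) ^+ p = x ^+ p * y ^+ p.
Proof. by rewrite exprMn. Qed.

Lemma frobDi i (x y : F) : (x + y) ^+ (p ^ i) = x ^+ (p ^ i) + y ^+ (p ^ i).
Proof.
elim: i => [|i IH]; first by rewrite !expn0 !expr1.
by rewrite expnSr !exprM IH frobD.
Qed.

Lemma frob_nat k : ((k%:R : F) ^+ p) = k%:R.
Proof. by have := pFrobenius_aut_nat pcharF k; rewrite pFrobenius_autE. Qed.

Lemma frob_fixi (y : F) i : y ^+ p = y -> y ^+ (p ^ i) = y.
Proof.
move=> hy; elim: i => [|i IH]; first by rewrite expn0 expr1.
by rewrite expnSr exprM IH hy.
Qed.

Lemma absTrD (x y : F) : absTr p m (x + y) = absTr p m x + absTr p m y.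
Proof. by rewrite /absTr -big_split /=; apply: eq_bigr => i _; rewrite frobDi. Qed.

Lemma absTrMfix (u x : F) : u ^+ p = u -> absTr p m (u * x) = u * absTr p m x.
Proof.
move=> hu; rewrite /absTr mulr_sumr; apply: eq_bigr => i _.
by rewrite exprMn (frob_fixi _ _ hu).
Qed.

Lemma absTr_frob (x : F) : absTr p m x ^+ p = absTr p m x.
Proof.
rewrite /absTr.
have -> : (\sum_(i < 2 * m) x ^+ (p ^ i)) ^+ p = \sum_(i < 2 * m) (x ^+ (p ^ i)) ^+ p.
  elim/big_rec2: _ => [|i y1 y2 _ <-]; first by rewrite expr0n; case: p pp.
  by rewrite frobD.
have : (0 < 2 * m)%N by rewrite muln_gt0.
case E: (2 * m)%N => [//|n] _.
rewrite big_ord_recr big_ord_recl /=.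
rewrite -exprM -expnSr -E -hq expf_card expn0 expr1 addrC; congr (_ + _).
by apply: eq_bigr => i _; rewrite -exprM -expnSr.
Qed.

Lemma natF_inj k j : (k < p)%N -> (j < p)%N -> (k%:R : F) = j%:R -> k = j.
Proof.
wlog jk : k j / (j <= k)%N.
  move=> W hk hj e; case: (leqP j k) => h; first exact: W.
  by apply/esym/W => //; apply: ltnW.
move=> hk hj e.
have : (p %| k - j)%N by rewrite (dvdn_pcharf pcharF) natrB // e subrr.
move/dvdn_leq; case: (ltnP j k) => h.
  by rewrite subn_gt0 h => /(_ isT) H; have := leq_ltn_trans H (leq_ltn_trans (leq_subr j k) hk); rewrite ltnn.
by move=> _; apply/eqP; rewrite eqn_leq h jk.
Qed.

Lemma prime_field_elt (y : F) : y ^+ p = y -> exists2 k, (k < p)%N & y = k%:R.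
Proof.
move=> hy.
case: (boolP (y \in [seq (k%:R : F) | k <- iota 0 p])).
  by case/mapP => k; rewrite mem_iota /= => hk ->; exists k.
move=> hnot; exfalso.
have p1 : (1 < p)%N by apply: prime_gt1.
pose P : {poly F} := 'X^p - 'X.
have sP : size P = p.+1.
  by rewrite /P size_polyDl ?size_polyXn // size_polyN size_polyX ltnS.
have P0 : P != 0 by rewrite -size_poly_eq0 sP.
suff : (size (y :: [seq (k%:R : F) | k <- iota 0 p]) < size P)%N.
  by rewrite sP /= size_map size_iota ltnn.
apply: max_poly_roots P0 _ _.
  rewrite /= /root /P !hornerE hy subrr eqxx /=.
  by apply/allP => z /mapP [k _ ->]; rewrite /root !hornerE frob_nat subrr.
rewrite /= hnot /= map_inj_in_uniq ?iota_uniq // => k j.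
by rewrite !mem_iota /= => hk hj; apply: natF_inj.
Qed.


Lemma pfn_nat k : primefield_nat p (k%:R : F) = (k %% p)%N.
Proof.
rewrite /primefield_nat; case: pickP => [n /eqP hn | none] /=.
  apply: natF_inj => //; first by rewrite ltn_pmod // prime_gt0.
  by rewrite hn (GRing.natr_mod_pchar pcharF).
have := none (Ordinal (ltn_pmod k (prime_gt0 pp))).
by rewrite /= (GRing.natr_mod_pchar pcharF) eqxx.
Qed.

Lemma absTr_pf (x : F) : exists2 k, (k < p)%N & absTr p m x = k%:R.
Proof. exact/prime_field_elt/absTr_frob. Qed.

Lemma absTr_nz : exists x : F, absTr p m x != 0.
Proof.
have [x hx|h] := pickP [pred x : F | absTr p m x != 0]; first by exists x.
exfalso.
have p1 : (1 < p)%N by apply: prime_gt1.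
pose P : {poly F} := \sum_(i < 2 * m) 'X^(p ^ i).
have hP x : P.[x] = absTr p m x.
  by rewrite /P horner_sum; apply: eq_bigr => i _; rewrite hornerXn.
have m2 : (0 < 2 * m)%N by rewrite muln_gt0.
have c1 : P`_1 = 1.
  rewrite /P coef_sum; move: m2; case E: (2 * m)%N => [//|n] _.
  rewrite big_ord_recl /= expn0 coefXn eqxx big1 ?addr0 // => i _.
  rewrite coefXn; case: eqP => // e; exfalso.
  have : (p <= p ^ (bump 0 i))%N by rewrite /bump /= add1n expnS leq_pmulr // expn_gt0 prime_gt0.
  by rewrite -e leqNgt p1.
have P0 : P != 0.
  by apply/eqP => e; move: c1; rewrite e coef0 => /eqP; rewrite eq_sym oner_eq0.
have sP : (size P <= (p ^ (2 * m).-1).+1)%N.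
  rewrite /P; apply: (leq_trans (size_sum _ _ _)); apply/bigmax_leqP => i _.
  rewrite size_polyXn ltnS leq_pexp2l ?prime_gt0 //.
  by rewrite -ltnS prednK.
have := max_poly_roots P0 (rs := enum F).
rewrite enum_uniq -cardE => H.
have H2 : (#|F| < size P)%N.
  apply: H => //; apply/allP => x _; rewrite /root hP.
  by move: (h x) => /negbFE.
have := leq_trans H2 sP; rewrite hq.
move: m2; case E: (2 * m)%N => [//|n] _ /=.
rewrite expnS ltnNge; move/negP; apply.
have : (0 < p ^ n)%N by rewrite expn_gt0 prime_gt0.
move: (p ^ n)%N => N hN.
by rewrite -{1}[N]mul1n ltn_pmul2r.
Qed.

Lemma absTr_one : exists x : F, absTr p m x = 1.
Proof.
have [x hx] := absTr_nz.
have hu : (absTr p m x)^-1 ^+ p = (absTr p m x)^-1 by rewrite exprVn absTr_frob.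
by exists ((absTr p m x)^-1 * x); rewrite absTrMfix // mulVf.
Qed.



Lemma cmul (a b c d : R) : (a +i* b) * (c +i* d) = (a*c - b*d) +i* (a*d + b*c).
Proof. by []. Qed.

Lemma cconj (a b : R) : (a +i* b)^* = (a +i* (-b)).
Proof. by []. Qed.

Lemma Cnat (n : nat) : ((n%:R : R)%:C = n%:R :> R[i]).
Proof. by rewrite -[RHS](rmorph_nat (@real_complex R)). Qed.

Lemma CM (a b : R) : (a * b)%:C = a%:C * b%:C :> R[i].
Proof. exact: (rmorphM (@real_complex R)). Qed.

Lemma pR0 : (p%:R : R) != 0.
Proof. by rewrite pnatr_eq0; case: p p2. Qed.

Lemma e_pD a b : e_p R p (a + b) = e_p R p a * e_p R p b.
Proof.
rewrite /e_p cmul natrD mulrDr mulrDl cosD sinD; congr (_ +i* _).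
by rewrite addrC.
Qed.

Lemma e_p0 : e_p R p 0 = 1.
Proof. by rewrite /e_p mulr0 mul0r cos0 sin0. Qed.

Lemma e_pp : e_p R p p = 1.
Proof.
rewrite /e_p mulfK ?pR0 // mulr_natl cos2pi sin2pi //.
Qed.

Lemma e_pMp k : e_p R p (k * p) = 1.
Proof. by elim: k => [|k IH]; rewrite ?mul0n ?e_p0 // mulSn e_pD e_pp IH mul1r. Qed.

Lemma e_p_mod n : e_p R p (n %% p) = e_p R p n.
Proof. by rewrite {2}(divn_eq n p) e_pD e_pMp mul1r. Qed.

Lemma e_p_conj n : e_p R p n * Num.conj (e_p R p n) = 1.
Proof.
rewrite /e_p; set c := cos _; set s := sin _.
transitivity ((c*c - s*(-s)) +i* (c*(-s) + s*c)); first by [].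
by rewrite mulrN opprK -!expr2 /c /s cos2Dsin2 mulrN (mulrC (sin _)) addNr.
Qed.

Lemma e_p1 : e_p R p 1 != 1.
Proof.
apply/eqP => /(congr1 (@complex.Im R)) /= /eqP.
apply/negP; rewrite gt_eqF //; apply: sin_gt0_pi.
have pg : (0 : R) < p%:R by rewrite ltr0n; case: p p2.
rewrite mulr1 divr_gt0 ?mulr_gt0 ?pi_gt0 ?ltr0n //=.
rewrite ltr_pdivrMr // mulrC ltr_pM2l ?pi_gt0 // ?ltr_nat //.
by case: p p2.
Qed.



Local Notation ps := (@psi R F p m).

Lemma psiD (x y : F) : ps (x + y) = ps x * ps y.
Proof.
rewrite /psi absTrD.
have [a _ ->] := absTr_pf x.
have [b _ ->] := absTr_pf y.
by rewrite -natrD !pfn_nat !e_p_mod // e_pD.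
Qed.

Lemma psi_conj (x : F) : ps x * Num.conj (ps x) = 1.
Proof. exact: e_p_conj. Qed.

Lemma psi_neq0 (x : F) : ps x != 0.
Proof. by apply/eqP => e; have := psi_conj x; rewrite e mul0r => /eqP; rewrite eq_sym oner_eq0. Qed.

Lemma psi0 : ps 0 = 1.
Proof.
have := psiD 0 0; rewrite addr0 => e.
apply: (mulfI (psi_neq0 0)); by rewrite mulr1 -e.
Qed.

Lemma psiN (x : F) : ps (- x) = Num.conj (ps x).
Proof.
have e : ps (- x) * ps x = 1 by rewrite -psiD addNr psi0.
by rewrite -[LHS]mulr1 -(psi_conj x) mulrA e mul1r.
Qed.

Lemma psi_nontriv : exists c : F, ps c != 1.
Proof.
have [c hc] := absTr_one.
exists c; rewrite /psi hc -[1 : F]/(1%:R) pfn_nat modn_small ?e_p1 //.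
exact: prime_gt1.
Qed.

Lemma sum_psi : \sum_(c : F) ps c = 0.
Proof.
have [c0 hc0] := psi_nontriv.
have e : \sum_(c : F) ps c = ps c0 * \sum_(c : F) ps c.
  rewrite mulr_sumr (reindex_inj (addrI c0)) /=.
  by apply: eq_bigr => c _; rewrite psiD.
have : (ps c0 - 1) * \sum_(c : F) ps c = 0 by rewrite mulrBl -e mul1r subrr.
by move/eqP; rewrite mulf_eq0 subr_eq0 (negbTE hc0) /= => /eqP.
Qed.

Lemma orth (x : F) : \sum_(c : F) ps (x * c) = if x == 0 then (#|F|%:R) else 0.
Proof.
case: eqP => [-> | /eqP hx].
  under eq_bigr do rewrite mul0r psi0.
  by rewrite sumr_const.
rewrite -[RHS]sum_psi; symmetry; by rewrite (reindex_inj (mulfI hx)).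
Qed.



Lemma psiB (a b : F) : ps a * Num.conj (ps b) = ps (a - b).
Proof. by rewrite -psiN -psiD. Qed.

Lemma parseval (f : F -> R[i]) :
  \sum_(x : F) `|\sum_(c : F) f c * ps (x * c)| ^+ 2 =
  #|F|%:R * \sum_(c : F) `|f c| ^+ 2.
Proof.
have step x : `|\sum_(c : F) f c * ps (x * c)| ^+ 2 =
   \sum_(c : F) \sum_(c' : F) (f c * Num.conj (f c')) * ps (x * (c - c')).
  rewrite normCK rmorph_sum mulr_suml; apply: eq_bigr => c _.
  rewrite mulr_sumr; apply: eq_bigr => c' _.
  by rewrite rmorphM mulrACA psiB mulrBr.
under eq_bigr do rewrite step.
rewrite exchange_big mulr_sumr; apply: eq_bigr => c _.
rewrite exchange_big /= (bigD1 c) //= [X in _ + X]big1 => [|c' hc'].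
  rewrite addr0 -mulr_sumr.
  under eq_bigr do rewrite mulrC.
  by rewrite orth subrr eqxx normCK mulrC.
rewrite -mulr_sumr.
under eq_bigr do rewrite mulrC.
by rewrite orth subr_eq0 eq_sym (negbTE hc') mulr0.
Qed.

Section Chi.
Variables (chi : F -> R[i]) (d : nat).
Hypotheses (hchi : mult_char chi) (hord : char_order chi d) (d1 : (1 < d)%N).

Lemma chi0 : chi 0 = 0. Proof. by case: hchi. Qed.
Lemma chi1 : chi 1 = 1. Proof. by case: hchi => _ []. Qed.
Lemma chiM x y : chi (x * y) = chi x * chi y. Proof. by case: hchi => _ []. Qed.

Lemma chiX x n : chi (x ^+ n) = chi x ^+ n.
Proof. by elim: n => [|n IH]; rewrite ?expr0 ?chi1 // !exprS chiM IH. Qed.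

Lemma chi_d x : x != 0 -> chi x ^+ d = 1.
Proof. by case: hord => _ [] h _; apply: h. Qed.

Lemma chi_dpow z : z != 0 -> chi (z ^+ d) = 1.
Proof. by move=> hz; rewrite chiX chi_d. Qed.

Lemma chiVM x : x != 0 -> chi x^-1 * chi x = 1.
Proof. by move=> hx; rewrite -chiM mulVf // chi1. Qed.

Lemma chi_neq0 x : x != 0 -> chi x != 0.
Proof. by move=> hx; apply/eqP => e; have := chiVM _ hx; rewrite e mulr0 => /eqP; rewrite eq_sym oner_eq0. Qed.

Lemma chi_norm x : x != 0 -> `|chi x| = 1.
Proof.
move=> hx; have d0 : (0 < d)%N by case: hord.
apply/eqP; rewrite -(pexpr_eq1 d0) ?normr_ge0 // -normrX chi_d // normr1 //.
Qed.

Lemma chiV x : chi x^-1 = Num.conj (chi x).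
Proof.
have [->|hx] := eqVneq x 0; first by rewrite invr0 chi0 rmorph0.
have e : chi x * Num.conj (chi x) = 1 by rewrite -normCK chi_norm // expr1n.
by rewrite -[LHS]mulr1 -e mulrA chiVM // mul1r.
Qed.

Lemma chi_nontriv : exists2 x, x != 0 & chi x != 1.
Proof.
case: hord => _ [] _ h; have [x [hx hx1]] := h 1%N d1.
by exists x; rewrite // expr1 in hx1.
Qed.

Lemma chi_sum : \sum_(c : F) chi c = 0.
Proof.
have [x0 hx0 hc0] := chi_nontriv.
have e : \sum_(c : F) chi c = chi x0 * \sum_(c : F) chi c.
  rewrite mulr_sumr (reindex_inj (mulfI hx0)) /=.
  by apply: eq_bigr => c _; rewrite chiM.
have : (chi x0 - 1) * \sum_(c : F) chi c = 0 by rewrite mulrBl -e mul1r subrr.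
by move/eqP; rewrite mulf_eq0 subr_eq0 (negbTE hc0) /= => /eqP.
Qed.

Lemma gchi x : \sum_(c : F) chi c * ps (x * c) = chi x^-1 * gauss_sum p m chi.
Proof.
have [->|hx] := eqVneq x 0.
  under eq_bigr do rewrite mul0r psi0 mulr1.
  by rewrite chi_sum invr0 chi0 mul0r.
rewrite /gauss_sum mulr_sumr (reindex_inj (mulfI (invr_neq0 hx))) /=.
apply: eq_bigr => c _. by rewrite [x * _]mulrA divff // mul1r chiM mulrA.
Qed.

Lemma gauss_norm : `|gauss_sum p m chi| ^+ 2 = #|F|%:R.
Proof.
have h := parseval chi.
have e : \sum_(x : F) `|\sum_(c : F) chi c * ps (x * c)| ^+ 2 =
         `|gauss_sum p m chi| ^+ 2 * \sum_(c : F) `|chi c| ^+ 2.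
  rewrite mulr_sumr (reindex_inj invr_inj) /=.
  by apply: eq_bigr => x _; rewrite gchi invrK normrM exprMn mulrC.
rewrite e in h.
have N0 : 0 < \sum_(c : F) `|chi c| ^+ 2.
  rewrite (bigD1 1) //= chi_norm ?oner_neq0 // expr1n.
  rewrite (lt_le_trans ltr01) // lerDl sumr_ge0 // => i _.
  exact: exprn_ge0 (normr_ge0 _).
by apply: (mulIf (lt0r_neq0 N0)); rewrite h mulrC.
Qed.


Lemma S_alt (A : {set F}) (c : F) :
  S_sum R p m A c = \sum_(a : F) (a \in A)%:R * ps (c * a).
Proof.
rewrite /S_sum big_mkcond /=; apply: eq_bigr => a _.
by case: (a \in A); rewrite ?mul1r ?mul0r // mulrC.
Qed.

Lemma S_norm_sum (A : {set F}) :
  \sum_(c : F) `|S_sum R p m A c| ^+ 2 = #|F|%:R * #|A|%:R.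
Proof.
under eq_bigr do rewrite S_alt.
rewrite parseval; congr (_ * _).
transitivity (\sum_(a in A) (1 : R[i])); last by rewrite sumr_const.
rewrite [RHS]big_mkcond /=; apply: eq_bigr => a _.
by case: (a \in A); rewrite ?normr1 ?normr0 ?expr1n ?expr0n.
Qed.

Lemma S0 (A : {set F}) : S_sum R p m A 0 = #|A|%:R.
Proof. by rewrite /S_sum; under eq_bigr do rewrite mulr0 psi0; rewrite sumr_const. Qed.

Lemma S_sq (A : {set F}) (c : F) :
  `|S_sum R p m A c| ^+ 2 = \sum_(a in A) \sum_(b in A) ps ((a - b) * c).
Proof.
rewrite normCK /S_sum rmorph_sum mulr_suml; apply: eq_bigr => a _.
rewrite mulr_sumr; apply: eq_bigr => b _.
by rewrite psiB mulrBl.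
Qed.

Lemma cross (A : {set F}) :
  \sum_(c : F) chi c * `|S_sum R p m A c| ^+ 2 =
  gauss_sum p m chi * \sum_(a in A) \sum_(b in A) chi (a - b)^-1.
Proof.
under eq_bigr do rewrite S_sq mulr_sumr.
rewrite exchange_big mulr_sumr; apply: eq_bigr => a _.
under eq_bigr do rewrite mulr_sumr.
rewrite exchange_big mulr_sumr; apply: eq_bigr => b _.
by rewrite gchi mulrC.
Qed.

Lemma same_argI (u v k : R[i]) : 0 <= k -> u = k * v -> same_arg u v.
Proof.
move=> k0 e; rewrite /same_arg.
have [k00|kn0] := eqVneq k 0; first by left; rewrite e k00 mul0r.
right; right; have kr : k \is Num.real by apply: ger0_real.
case/complex_realP: kr => r er; exists r; split; last by rewrite e er.
by rewrite -ltcR -er lt0r kn0 k0.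
Qed.

Lemma same_argE (u v : R[i]) : v != 0 -> same_arg u v -> exists2 k, 0 <= k & u = k * v.
Proof.
move=> v0 [->|[v00|[r [r0 ->]]]]; first by exists 0; rewrite ?mul0r.
  by rewrite v00 eqxx in v0.
by exists r%:C; rewrite // ler0c ltW.
Qed.

Lemma dpow_of_chi1 x : x != 0 -> chi x = 1 -> exists2 z, z != 0 & x = z ^+ d.
Proof.
move=> hx hc.
have q1 : (0 < #|F|.-1)%N.
  by rewrite -(cardC1 (0:F)) (cardD1 1) !inE oner_neq0.
have unr (y : F) : y != 0 -> y ^+ #|F|.-1 = 1.
  move=> hy; apply: (mulIf hy); rewrite mul1r -exprSr prednK ?expf_card //.
  by move: q1; case: #|F|.
have /hasP [g hgin prim] : has (#|F|.-1).-primitive_root (enum (predC1 (0 : F))).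
  apply: has_prim_root => //.
  - by apply/allP => y; rewrite mem_enum /= unity_rootE => hy; rewrite unr.
  - exact: enum_uniq.
  - by rewrite -cardE cardC1.
move: hgin; rewrite mem_enum /= => hg0.
have d0 : (0 < d)%N by case: hord.
have [i ei] := prim_rootP prim (unr _ hx).
have ck : chi g ^+ (i %% d) = 1.
  have : chi g ^+ i = 1 by rewrite -chiX -ei.
  by rewrite {1}(divn_eq i d) exprD mulnC exprM chi_d // expr1n mul1r.
have im : (i %% d = 0)%N.
  apply/eqP; apply: contraT => hk; exfalso.
  case: hord => _ [] _ /(_ (i %% d)%N); rewrite lt0n hk ltn_pmod //= => /(_ isT).
  case=> y [hy]; apply/negP; rewrite negbK.
  have [j ->] := prim_rootP prim (unr _ hy).
  by rewrite chiX -exprM mulnC exprM ck expr1n.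
exists (g ^+ (i %/ d)); first by rewrite expf_neq0.
by rewrite ei {1}(divn_eq i d) im addn0 exprM.
Qed.

Lemma clique_bound (B : {set F}) : gp_clique d B -> (#|B| <= p ^ m)%N.
Proof.
move=> hB; have [nu hnu0 hnu1] := chi_nontriv.
pose f := fun ab : F * F => ab.1 + nu * ab.2.
have inj : {in setX B B &, injective f}.
  move=> [a b] [a' b'] /setXP [ha hb] /setXP [ha' hb']; rewrite /f /= => e.
  have [ebb|nbb] := eqVneq b b'.
    by subst b'; move/addIr: e => ->.
  have [eaa|naa] := eqVneq a a'.
    by subst a'; move/addrI/(mulfI hnu0): e => ebb; rewrite ebb eqxx in nbb.
  exfalso.
  have [_ [z [hz ez]]] := hB a a' ha ha' naa.
  have nb' : b' != b by rewrite eq_sym.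
  have [_ [w [hw ew]]] := hB b' b hb' hb nb'.
  have e2 : a - a' - nu * (b' - b) = (a + nu * b) - (a' + nu * b').
    by ring.
  move: e2; rewrite e subrr ez ew => /eqP; rewrite subr_eq0 => /eqP /(congr1 chi).
  by rewrite chiM !chi_dpow // mulr1 => h1; rewrite -h1 eqxx in hnu1.
have := max_card (f @: setX B B); rewrite card_in_imset // cardsX hq.
by rewrite mulnC expnM mulnn leq_exp2r.
Qed.


Section SetA.
Variable A : {set F}.
Hypothesis hA : #|A| = (p ^ m)%N.
Local Notation sR := ((p ^ m)%:R : R[i]).
Local Notation G := (gauss_sum p m chi).
Local Notation SS := (S_sum R p m A).
Local Notation z := (fun c => chi c * `|SS c| ^+ 2).

Lemma sR_gt1 : 1 < sR.
Proof. by rewrite ltr1n -{1}(expn0 p) ltn_exp2l // prime_gt1. Qed.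

Lemma sR_ge0 : 0 <= sR.
Proof. exact: ler0n. Qed.

Lemma sR_neq0 : sR != 0.
Proof. by rewrite gt_eqF // (lt_trans ltr01 sR_gt1). Qed.

Lemma qR : (#|F|%:R : R[i]) = sR ^+ 2.
Proof. by rewrite hq mulnC expnM natrX. Qed.

Lemma Gnorm : `|G| = sR.
Proof.
have := gauss_norm; rewrite qR => /eqP; rewrite eqrXn2 ?sR_ge0 //.
by move/eqP.
Qed.

Lemma G_neq0 : G != 0.
Proof. by rewrite -normr_eq0 Gnorm sR_neq0. Qed.

Lemma z_norm c : `|z c| = (c != 0)%:R * `|SS c| ^+ 2.
Proof.
have [->|hc] := eqVneq c 0 => /=; first by rewrite chi0 !(mul0r (`|SS 0| ^+ 2)) normr0.
rewrite normrM chi_norm //; congr (_ * _); by rewrite normrX normr_id.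
Qed.

Lemma sum_z_norm : \sum_(c : F) `|z c| = sR * (sR * sR - sR).
Proof.
have h := S_norm_sum A.
rewrite (bigD1 0) //= S0 hA qR in h.
rewrite (bigD1 0) //= z_norm eqxx mul0r add0r.
have -> : \sum_(c | c != 0) `|z c| = \sum_(c | c != 0) `|SS c| ^+ 2.
  by apply: eq_bigr => c hc; rewrite z_norm hc mul1r.
have -> : \sum_(c | c != 0) `|SS c| ^+ 2 = sR ^+ 2 * sR - `|sR| ^+ 2.
  by rewrite -h; ring.
by rewrite ger0_norm ?sR_ge0 //; ring.
Qed.

Lemma Vv_val : \sum_(a in A) \sum_(b in A) (1 - (a == b)%:R) = sR * sR - sR :> R[i].
Proof.
have e a : a \in A -> \sum_(b in A) (1 - (a == b)%:R) = sR - 1 :> R[i].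
  move=> ha; rewrite sumrB sumr_const hA (bigD1 a) //= eqxx big1 ?addr0 //.
  by move=> b /andP [_ hb]; rewrite eq_sym (negbTE hb).
rewrite (eq_bigr _ e) sumr_const hA -mulr_natr; ring.
Qed.

Lemma Vv_pos : 0 < sR * sR - sR.
Proof.
rewrite -{3}[sR]mul1r -mulrBl mulr_gt0 ?subr_gt0 ?sR_gt1 //.
exact: lt_trans ltr01 sR_gt1.
Qed.

Lemma clique_chi (a b : F) : gp_clique d A -> a \in A -> b \in A ->
  chi (a - b)^-1 = 1 - (a == b)%:R.
Proof.
move=> hcl ha hb; have [->|nab] := eqVneq a b.
  by rewrite subrr invr0 chi0 subrr.
have [_ [z0 [hz ez]]] := hcl a b ha hb nab.
by rewrite ez -exprVn chi_dpow ?invr_neq0 // subr0.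
Qed.

Lemma forward : gp_clique d A -> forall c : F, c != 0 -> same_arg (z c) G.
Proof.
move=> hcl.
have W : \sum_(a in A) \sum_(b in A) chi (a - b)^-1 = sR * sR - sR.
  rewrite -Vv_val; apply: eq_bigr => a ha; apply: eq_bigr => b hb.
  exact: clique_chi.
have hsum : \sum_(c : F) z c = G * (sR * sR - sR) by rewrite cross W.
have hn : `|\sum_(c : F) z c| = \sum_(c : F) `|z c|.
  by rewrite hsum sum_z_norm normrM Gnorm ger0_norm // ltW // Vv_pos.
have [t t1 ht] := normC_sum_eq hn.
have et : t = G / sR.
  have : \sum_(c : F) z c = (\sum_(c : F) `|z c|) * t.
    by rewrite mulr_suml; apply: eq_bigr => c _; apply: ht.
  rewrite hsum sum_z_norm => e.
  apply: (mulfI sR_neq0); rewrite [RHS]mulrC divfK ?sR_neq0 //.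
  apply: (mulIf (lt0r_neq0 Vv_pos)).
  by rewrite e; ring.
move=> c _; apply: (@same_argI _ _ (`|z c| / sR)).
  by rewrite divr_ge0 ?normr_ge0 ?sR_ge0.
rewrite [LHS]ht // et. ring.
Qed.


Lemma backward : (forall c : F, c != 0 -> same_arg (z c) G) -> gp_clique d A.
Proof.
move=> hsa.
have z0 : z 0 = 0 by rewrite /= chi0 (mul0r (`|SS 0| ^+ 2)).
have hz c : z c = `|z c| / sR * G.
  have [->|hc] := eqVneq c 0; first by rewrite z0 normr0; ring.
  case: (same_argE _ _ G_neq0 (hsa c hc)) => k k0 ek.
  by rewrite ek normrM (ger0_norm k0) Gnorm mulfK ?sR_neq0.
have e1 : sR * (sR * sR - sR) / sR = sR * sR - sR by rewrite mulrC mulKf ?sR_neq0.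
have hsum : \sum_(c : F) z c = (sR * sR - sR) * G.
  rewrite (eq_bigr _ (fun c _ => hz c)) -mulr_suml -mulr_suml sum_z_norm.
  by rewrite e1.
have W : \sum_(a in A) \sum_(b in A) chi (a - b)^-1 =
         \sum_(a in A) \sum_(b in A) (1 - (a == b)%:R).
  rewrite Vv_val; apply: (mulfI G_neq0); rewrite -cross hsum mulrC //.
have bnd a b : `|chi (a - b)^-1| <= 1 - (a == b)%:R.
  have [->|nab] := eqVneq a b; first by rewrite subrr invr0 chi0 normr0 subrr.
  by rewrite chi_norm ?invr_neq0 ?subr_eq0 // subr0.
have outer : forall a, a \in A ->
    \sum_(b in A) chi (a - b)^-1 = \sum_(b in A) (1 - (a == b)%:R).
  apply: normC_sum_upper; last exact: W.
  move=> a' _; apply: le_trans (ler_norm_sum _ _ _) _; apply: ler_sum => b _; exact: bnd.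
have inner a : a \in A -> forall b, b \in A -> chi (a - b)^-1 = 1 - (a == b)%:R.
  move=> ha; apply: normC_sum_upper => [b _|]; first exact: bnd.
  exact: outer.
move=> a b ha hb nab; split => //.
have hab : a - b != 0 by rewrite subr_eq0.
have h1 : chi (a - b) = 1.
  by have := chiVM _ hab; rewrite inner // (negbTE nab) subr0 mul1r.
have [w hw ew] := dpow_of_chi1 _ hab h1.
by exists w.
Qed.

Lemma part1 : gp_max_clique d A <-> (forall c : F, c != 0 -> same_arg (z c) G).
Proof.
split => [[hcl _]|h]; first exact: forward.
split; first exact: backward.
by move=> B hB; rewrite hA; apply: clique_bound.
Qed.

Lemma sqrtq_val : sqrtq R F = sR.
Proof.
rewrite /sqrtq hq mulnC expnM natrX sqrtr_sqr ger0_norm ?ler0n //.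
exact: Cnat.
Qed.

Lemma eps_unique c : c != 0 -> same_arg (z c) G -> SS c != 0 -> chi c = G / sR.
Proof.
move=> hc hs hS; have [k k0 ek] := same_argE _ _ G_neq0 hs.
have hn : `|SS c| ^+ 2 = k * sR.
  have := congr1 (fun x => `|x|) ek; rewrite normrM chi_norm // normrX normr_id normrM ger0_norm // Gnorm.
  by move=> <-; ring.
have hS2 : `|SS c| ^+ 2 != 0 by rewrite expf_neq0 // normr_eq0.
apply: (mulIf hS2); rewrite ek hn; field.
exact: sR_neq0.
Qed.

End SetA.

Lemma part2 : @gp_clique_number F d (p ^ m)%N ->
  [/\ (gauss_sum p m chi / (p ^ m)%:R) ^+ d = 1,
      pure_num (gauss_sum p m chi),
      gauss_sum p m chi = (gauss_sum p m chi / (p ^ m)%:R) * sqrtq R F &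
      forall A : {set F}, #|A| = (p ^ m)%N -> gp_max_clique d A ->
        forall c : F, c != 0 -> chi c != gauss_sum p m chi / (p ^ m)%:R ->
          S_sum R p m A c = 0].
Proof.
case=> [[A0 [hcl hA0]] _].
have hsa := forward _ hA0 hcl.
have [c hc hSc] : exists2 c, c != 0 & S_sum R p m A0 c != 0.
  have [c /andP [hc hSc]|none] := pickP [pred c | (c != 0) && (S_sum R p m A0 c != 0)].
    by exists c.
  exfalso.
  have := sum_z_norm _ hA0; rewrite big1 => [/esym/eqP|c _].
    by rewrite mulf_eq0 (negbTE (sR_neq0)) (negbTE (lt0r_neq0 (Vv_pos))).
  rewrite z_norm //; move: (none c) => /= /negbT; rewrite negb_and !negbK.
  case/orP => [/eqP->|/eqP->]; first by rewrite eqxx mul0r.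
  by rewrite normr0 expr0n mulr0.
have ec := eps_unique _ _ hc (hsa c hc) hSc.
have d0 : (0 < d)%N by case: hord.
split.
- by rewrite -ec chi_d.
- exists (Posz d); split; first by rewrite eqz_nat -lt0n.
  rewrite -exprnP.
  have -> : gauss_sum p m chi = gauss_sum p m chi / (p ^ m)%:R * (p ^ m)%:R.
    by rewrite divfK ?sR_neq0.
  by rewrite exprMn -ec chi_d // mul1r rpredX // realn.
- by rewrite sqrtq_val divfK ?sR_neq0.
- move=> A hA [hcl' _] c' hc' hne; apply/eqP; apply: contraNT hne => hS.
  by apply/eqP; apply: eps_unique _ _ hc' (forward _ hA hcl' c' hc') hS.
Qed.
End Chi.

End Main.

Theorem theorem1p9 (R : realType) (F : finFieldType) (p m d : nat)
  (chi : F -> R[i]) (A : {set F}) :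
  prime p -> odd p -> (0 < m)%N -> #|F| = (p ^ (2 * m))%N ->
  (1 < d)%N -> #|F| = 1 %[mod 2 * d] ->
  mult_char chi -> char_order chi d ->
  #|A| = (p ^ m)%N ->
  (@gp_max_clique F d A <->
     (forall c : F, c != 0 ->
        @same_arg R (chi c * `|@S_sum R F p m A c| ^+ 2) (@gauss_sum R F p m chi)))
  /\
  (@gp_clique_number F d (p ^ m)%N ->
     @eps_gauss R F p m chi ^+ d = 1 /\
     @pure_num R (@gauss_sum R F p m chi) /\
     @gauss_sum R F p m chi = @eps_gauss R F p m chi * @sqrtq R F /\
     (@gp_max_clique F d A ->
        forall c : F, c != 0 -> chi c != @eps_gauss R F p m chi ->
          @S_sum R F p m A c = 0)).
Proof.
move=> pp hodd hm hq d1 _ hchi hord hA.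
have p2 : (2 < p)%N.
  by move: (prime_gt1 pp) hodd; case: (p) => [|[|[|n]]].
have eps_e : eps_gauss p m chi = gauss_sum p m chi / (p ^ m)%:R.
  by rewrite /eps_gauss (sqrtq_val R F p m hq).
split; first exact: (part1 _ _ _ _ pp p2 hm hq _ _ hchi hord d1 _ hA).
move=> hcn; have [h1 h2 h3 h4] := part2 _ _ _ _ pp p2 hm hq _ _ hchi hord d1 hcn.
rewrite eps_e; split => //; split => //; split => //.
by move=> hmax c hc hne; exact: h4 A hA hmax c hc hne.
Qed.
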